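(* Let $\mathcal{X}\subset\mathbb{R}^n$ be a convex connected domain and $K:\mathcal{X}\to\mathbb{R}$ a smooth function whose Hessian $G(x)=\nabla^2K(x)$ is invertible for all $x$. Let $\mathcal{U}=\mathbb{R}^m$, $\mathcal{Y}=\mathcal{U}^*\cong\mathbb{R}^m$, let $\sigma$ be an $m\times m$ signature matrix, and consider the smooth system $\dot x=F(x,u)$, $y=H(x,u)$. Then the system is reciprocal with respect to $G$ and $\sigma$ if and only if for all $x,u$ $$\sigma\frac{\partial H(x,u)}{\partial u}=\Big(\frac{\partial H(x,u)}{\partial u}\Big)^\top\sigma,\qquad G(x)\frac{\partial F(x,u)}{\partial u}=\Big(\frac{\partial H(x,u)}{\partial x}\Big)^\top\sigma,\qquad G(x)\frac{\partial F(x,u)}{\partial x}=\Big(\frac{\partial F(x,u)}{\partial x}\Big)^\top G(x).$$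
   Context: A signature matrix is a diagonal matrix with diagonal entries $\pm1$. Partial derivative matrices are Jacobians. On $T^*\mathcal{X}\times\mathcal{U}\times\mathcal{Y}$ with coordinates $(x,p,u,y)$ consider the symplectic form $\omega=\sum_i dp_i\wedge dx_i+\sum_j dy_j\wedge du_j$; a Lagrangian submanifold is a submanifold on which $\omega$ vanishes and which is maximal with this property. The system is reciprocal with respect to $G$ and $\sigma$ if the set $\{(x,p,u,y): p=G(x)F(x,u),\ y=\sigma H(x,u)\}$ is a Lagrangian submanifold of $T^*\mathcal{X}\times\mathcal{U}\times\mathcal{Y}$. *)

(* Defs.v *)
From HB Require Import structures.
From mathcomp Require Import all_boot all_order all_algebra.
From mathcomp Require Import all_classical all_reals all_analysis.
Set Implicit Arguments. Unset Strict Implicit. Unset Printing Implicit Defensive.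
Import Order.TTheory GRing.Theory Num.Theory.
Import numFieldNormedType.Exports.
Local Open Scope classical_set_scope.
Local Open Scope ring_scope.

Section Defs.
Variable R : realType.

Fixpoint Ck_on {V W : normedModType R} (k : nat) (A : set V) (f : V -> W)
    : Prop :=
  match k with
  | 0%N => forall x, A x -> {for x, continuous f}
  | k'.+1 => (forall x, A x -> differentiable f x) /\
             (forall v : V, Ck_on k' A (fun x => 'D_v f x))
  end.

Definition smooth_on {V W : normedModType R} (A : set V) (f : V -> W) :=
  forall k, Ck_on k A f.

(** Jacobian matrix (column-vector convention): jac f x i j = d f_i / d x_j. *)
Definition jac (n m : nat) (f : 'cV[R]_n -> 'cV[R]_m) (x : 'cV[R]_n)
    : 'M[R]_(m, n) :=
  \matrix_(i < m, j < n) ('d f x (delta_mx j ord0)) i ord0.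

Definition grad (n : nat) (K : 'cV[R]_n -> R) (x : 'cV[R]_n) : 'cV[R]_n :=
  \col_(i < n) ('d K x (delta_mx i ord0)).

Definition hessian (n : nat) (K : 'cV[R]_n -> R) (x : 'cV[R]_n) : 'M[R]_n :=
  jac (grad K) x.

Definition signature_matrix (m : nat) (s : 'M[R]_m) : Prop :=
  is_diag_mx s /\ forall i, s i i = 1 \/ s i i = -1.

(** Points of T^*X x U x Y are quadruples (x, p, u, y). *)
Definition phase (n m : nat) :=
  ('cV[R]_n * 'cV[R]_n * 'cV[R]_m * 'cV[R]_m)%type.

(** omega = sum_i dp_i /\ dx_i + sum_j dy_j /\ du_j evaluated on two
    tangent vectors. *)
Definition omega (n m : nat) (v w : phase n m) : R :=
  let: (a, b, c, d) := v in let: (a', b', c', d') := w in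
  (\sum_(i < n) (b i ord0 * a' i ord0 - b' i ord0 * a i ord0)) +
  (\sum_(j < m) (d j ord0 * c' j ord0 - d' j ord0 * c j ord0)).

Definition lagrangian_subspace (n m : nat) (T : set (phase n m)) : Prop :=
  (forall v w, T v -> T w -> omega v w = 0) /\
  (forall T' : set (phase n m),
      T `<=` T' ->
      (forall v w, T' v -> T' w -> omega v w = 0) ->
      (forall v w : phase n m, T' v -> T' w -> T' (v + w)) ->
      (forall (a : R) v, T' v -> T' (a *: v)) ->
      T' = T).

(** The set L = { (x,p,u,y) : p = G(x)F(x,u), y = sigma H(x,u), x in X }
    is the image of the graph parametrization Phi(x,u) = (x, G F, u, sigma H)
    over X x U; its tangent space at Phi(x,u) is the range of d Phi(x,u).
    L is a Lagrangian submanifold iff every tangent space is Lagrangian. *)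
Definition graph_param (n m : nat) (G : 'cV[R]_n -> 'M[R]_n)
    (sigma : 'M[R]_m) (F : 'cV[R]_n -> 'cV[R]_m -> 'cV[R]_n)
    (H : 'cV[R]_n -> 'cV[R]_m -> 'cV[R]_m)
    (z : 'cV[R]_n * 'cV[R]_m) : phase n m :=
  (z.1, G z.1 *m F z.1 z.2, z.2, sigma *m H z.1 z.2).

Definition reciprocal (n m : nat) (X : set 'cV[R]_n) (G : 'cV[R]_n -> 'M[R]_n)
    (sigma : 'M[R]_m) (F : 'cV[R]_n -> 'cV[R]_m -> 'cV[R]_n)
    (H : 'cV[R]_n -> 'cV[R]_m -> 'cV[R]_m) : Prop :=
  forall x u, X x ->
    lagrangian_subspace
      (range ('d (graph_param G sigma F H) (x, u) : _ -> phase n m)).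

End Defs.

(* Main.v *)
Require Import Defs.
From HB Require Import structures.
From mathcomp Require Import all_boot all_order all_algebra.
From mathcomp Require Import all_classical all_reals all_analysis.
From mathcomp Require Import ring lra.
Set Implicit Arguments. Unset Strict Implicit. Unset Printing Implicit Defensive.
Import Order.TTheory GRing.Theory Num.Theory.
Import numFieldNormedType.Exports.
Local Open Scope classical_set_scope.
Local Open Scope ring_scope.


Section S.
Variable R : realType.


Lemma near_eq_diff {V W : normedModType R} (f g : V -> W) x :
  (\forall y \near x, f y = g y) -> differentiable g x ->
  differentiable f x /\ 'd f x = 'd g x :> (V -> W).
Proof.
move=> fg dg.
have fx : f x = g x := nbhs_singleton fg.
have key : f \o shift x = cst (f x) + 'd g x +o_ 0 id.
  apply/eqaddoP => eps heps.
  have := diff_locally dg => /eqaddoP /(_ eps heps) hg.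
  move: fg; rewrite nbhs0P => fg.
  near=> h.
  rewrite fx.
  have -> : (f \o shift x - (cst (g x) + 'd g x)) h = f (h + x) - (g x + 'd g x h) by [].
  have -> : f (h + x) = g (h + x) by rewrite addrC; near: h; exact: fg.
  near: h; exact: hg.
have e : 'd f x = 'd g x :> (V -> W).
  by apply: diff_unique => //; exact: diff_continuous.
split=> //; apply/diff_locallyP; rewrite e; split => //.
exact: diff_continuous.
Unshelve. all: by end_near. Qed.



Lemma line_derive {V W : normedModType R} (f : V -> W) (a u : V) (s : R) :
  differentiable f (a + s *: u) ->
  is_derive s 1 (fun r : R => f (a + r *: u)) ('D_u f (a + s *: u)).
Proof.
move=> df.
have E : (fun h : R => h^-1 *: (((fun r : R => f (a + r *: u)) \o shift s) (h *: 1)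
            - f (a + s *: u))) =
         (fun h : R => h^-1 *: ((f \o shift (a + s *: u)) (h *: u) - f (a + s *: u))).
  apply/funext => h /=; congr (_ *: (_ - _)); congr f.
  by rewrite scalerDl -[h *: 1]/(h * 1) mulr1 addrCA.
have dv : derivable f (a + s *: u) u by exact: diff_derivable.
have d1 : derivable (fun r : R => f (a + r *: u)) s 1 by rewrite /derivable E.
have d2 : 'D_1 (fun r : R => f (a + r *: u)) s = 'D_u f (a + s *: u) by rewrite /derive E.
by rewrite -d2; exact: derivableP.
Qed.


Lemma mvt2 {V : normedModType R} (g : V -> R) (A : set V) (y u v : V) (t : R) :
  0 < t ->
  (forall s r, 0 <= s <= t -> 0 <= r <= t -> A (y + s *: u + r *: v)) ->
  (forall p, A p -> differentiable g p) ->
  (forall p, A p -> differentiable ('D_u g) p) ->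
  exists2 xi, 0 <= xi <= t & exists2 eta, 0 <= eta <= t &
    g (y + t *: u + t *: v) - g (y + t *: u) - g (y + t *: v) + g y =
    t * t * 'D_v ('D_u g) (y + xi *: u + eta *: v).
Proof.
move=> t0 hA dg dgu.
pose phi := (fun s : R => g ((y + t *: v) + s *: u)) - (fun s : R => g (y + s *: u)).
have hphi : forall s, 0 <= s <= t ->
    is_derive s 1 phi ('D_u g (y + t *: v + s *: u) - 'D_u g (y + s *: u)).
  move=> s hs; apply: is_deriveB; apply: line_derive; apply: dg.
    by rewrite addrAC; apply: hA => //; rewrite lexx ltW.
  by rewrite -[y + s *: u]addr0 -(scale0r v); apply: hA => //; rewrite lexx ltW.
have [xi xiI Exi] : exists2 c, c \in `]0, t[ & phi t - phi 0 =
    ('D_u g (y + t *: v + c *: u) - 'D_u g (y + c *: u)) * (t - 0).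
  apply: MVT => //.
    by move=> c; rewrite in_itv /= => /andP[c0 ct]; apply: hphi; rewrite !ltW.
  apply: derivable_within_continuous => c; rewrite in_itv /= => hc.
  by have [] := hphi c hc.
move: xiI; rewrite in_itv /= => /andP[xi0 xit].
pose psi := fun r : R => 'D_u g ((y + xi *: u) + r *: v).
have hpsi : forall r, 0 <= r <= t ->
    is_derive r 1 psi ('D_v ('D_u g) (y + xi *: u + r *: v)).
  move=> r hr; apply: line_derive; apply: dgu; apply: hA => //.
  by rewrite !ltW.
have [eta etaI Eeta] : exists2 c, c \in `]0, t[ & psi t - psi 0 =
    'D_v ('D_u g) (y + xi *: u + c *: v) * (t - 0).
  apply: MVT => //.
    by move=> c; rewrite in_itv /= => /andP[c0 ct]; apply: hpsi; rewrite !ltW.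
  apply: derivable_within_continuous => c; rewrite in_itv /= => hc.
  by have [] := hpsi c hc.
move: etaI; rewrite in_itv /= => /andP[eta0 etat].
exists xi; first by rewrite !ltW.
exists eta; first by rewrite !ltW.
have E1 : g (y + t *: v + t *: u) - g (y + t *: u) - (g (y + t *: v + 0 *: u) - g (y + 0 *: u))
   = ('D_u g (y + t *: v + xi *: u) - 'D_u g (y + xi *: u)) * (t - 0).
  exact: Exi.
have E2 : 'D_u g (y + xi *: u + t *: v) - 'D_u g (y + xi *: u + 0 *: v)
   = 'D_v ('D_u g) (y + xi *: u + eta *: v) * (t - 0).
  exact: Eeta.
move: E1 E2; rewrite !scale0r !addr0 !subr0 => E1 E2.
rewrite [y + t *: v + xi *: u]addrAC E2 in E1.
rewrite [y + t *: v + t *: u]addrAC in E1.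
rewrite mulrC mulrA -E1; ring.
Qed.


End S.


Section S3.
Variable R : realType.
Lemma schwarz {V : normedModType R} (A : set V) (g : V -> R) y u v :
  open A -> A y ->
  (forall p, A p -> differentiable g p) ->
  (forall p, A p -> differentiable ('D_u g) p) ->
  (forall p, A p -> differentiable ('D_v g) p) ->
  {for y, continuous ('D_v ('D_u g))} -> {for y, continuous ('D_u ('D_v g))} ->
  'D_v ('D_u g) y = 'D_u ('D_v g) y.
Proof.
move=> oA Ay dg dgu dgv c1 c2.
apply/eqP; rewrite -subr_eq0 -normr_le0; apply/ler_addgt0Pr => e e0; rewrite add0r.
have e2 : 0 < e / 2 by rewrite divr_gt0.
have NA : \forall p \near y, A p by apply: open_nbhs_nbhs; split.
have N1 : \forall p \near y, `|'D_v ('D_u g) y - 'D_v ('D_u g) p| < e / 2.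
  exact: ((cvgrPdist_lt _ _).1 c1 _ e2).
have N2 : \forall p \near y, `|'D_u ('D_v g) y - 'D_u ('D_v g) p| < e / 2.
  exact: ((cvgrPdist_lt _ _).1 c2 _ e2).
have N : nbhs y (A `&` ((fun p => `|'D_v ('D_u g) y - 'D_v ('D_u g) p| < e / 2) `&`
     (fun p => `|'D_u ('D_v g) y - 'D_u ('D_v g) p| < e / 2))).
  exact: (filterI NA (filterI N1 N2)).
have [r r0 hr] := (nbhs_ballP _ _).1 N.
have N0 : 0 < `|u| + `|v| + 1 by rewrite ltr_wpDl // addr_ge0.
pose t := r / (`|u| + `|v| + 1).
have t0 : 0 < t by rewrite divr_gt0.
have rt : r = t * (`|u| + `|v| + 1) by rewrite /t divfK // gt_eqF.
have hB : forall s q, 0 <= s <= t -> 0 <= q <= t -> ball y r (y + s *: u + q *: v).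
  move=> s q /andP[s0 st] /andP[q0 qt]; rewrite -ball_normE /= -addrA opprD addrA subrr add0r normrN.
  apply: (le_lt_trans (ler_normD _ _)); rewrite !normrZ !ger0_norm // rt.
  have a1 : s * `|u| <= t * `|u| by rewrite ler_wpM2r.
  have a2 : q * `|v| <= t * `|v| by rewrite ler_wpM2r.
  rewrite !mulrDr mulr1; lra.
have hBA : forall p, ball y r p -> A p by move=> p /hr [].
have [xi xiI [eta etaI E1]] := mvt2 t0 hB (fun p hp => dg p (hBA p hp))
   (fun p hp => dgu p (hBA p hp)).
have hB' : forall s q, 0 <= s <= t -> 0 <= q <= t -> ball y r (y + s *: v + q *: u).
  by move=> s q hs hq; rewrite addrAC; apply: hB.
have [xi' xiI' [eta' etaI' E2]] := mvt2 t0 hB' (fun p hp => dg p (hBA p hp))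
   (fun p hp => dgv p (hBA p hp)).
have E : 'D_v ('D_u g) (y + xi *: u + eta *: v) = 'D_u ('D_v g) (y + xi' *: v + eta' *: u).
  apply: (@mulfI _ (t * t)); first by rewrite mulf_neq0 // gt_eqF.
  rewrite -E1 -E2 [y + t *: v + t *: u]addrAC; ring.
have [_ [h1 _]] := hr _ (hB _ _ xiI etaI).
have [_ [_ h2]] := hr _ (hB' _ _ xiI' etaI').
rewrite E in h1.
rewrite (splitr e); apply: le_trans (ltW (ltrD h1 h2)).
rewrite -[X in `|X - _|](subrK ('D_u ('D_v g) (y + xi' *: v + eta' *: u))).
have tri : forall a b c : R, `|a - b + b - c| <= `|a - b| + `|c - b|.
  by move=> a b c; rewrite -addrA [`|c - b|]distrC; exact: ler_normD.
exact: tri.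
Qed.


End S3.


Section S2.
Variable R : realType.

Lemma diff_mx {V : normedModType R} p q (M : V -> 'M[R]_(p,q)) x :
  (forall i j, differentiable (fun y => M y i j) x) -> differentiable M x.
Proof.
move=> h.
have -> : M = \sum_(i < p) \sum_(j < q) (fun y => M y i j *: delta_mx i j).
  apply/funext => y; rewrite fct_sumE [LHS]matrix_sum_delta.
  by apply: eq_bigr => i _; rewrite fct_sumE.
apply: differentiable_sum => i; apply: differentiable_sum => j.
exact: differentiableZl.
Qed.

Lemma derive_entry {V : normedModType R} p q (M : V -> 'M[R]_(p,q)) z t i j :
  derivable M z t -> 'D_t (fun y => M y i j) z = ('D_t M z) i j.
Proof. by move=> dM; rewrite derive_mx // mxE. Qed.

Lemma diff_entry {V : normedModType R} p q (M : V -> 'M[R]_(p,q)) z i j :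
  differentiable M z -> differentiable (fun y => M y i j) z.
Proof. by move=> dM; exact: (differentiable_comp dM (differentiable_coord _ _ _)). Qed.

Lemma diff_mulmx {V : normedModType R} p q r (M : V -> 'M[R]_(p,q))
    (N : V -> 'M[R]_(q,r)) z :
  differentiable M z -> differentiable N z ->
  differentiable (fun y => M y *m N y) z /\
  forall t, 'd (fun y => M y *m N y) z t = 'D_t M z *m N z + M z *m 'D_t N z.
Proof.
move=> dM dN.
have E i k : (fun y => (M y *m N y) i k) =
    \sum_(j < q) ((fun y => M y i j) * (fun y => N y j k)).
  by apply/funext => y; rewrite mxE fct_sumE; apply: eq_bigr.
have dP : differentiable (fun y => M y *m N y) z.
  apply: diff_mx => i k; rewrite E; apply: differentiable_sum => j.
  by apply: differentiableM; apply: diff_entry.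
split => // t.
rewrite -deriveE //; apply/matrixP => i k.
rewrite -derive_entry; last exact: diff_derivable.
rewrite E derive_sum; last first.
  move=> j; apply: diff_derivable; apply: differentiableM; exact: diff_entry.
rewrite !mxE -big_split; apply: eq_bigr => j _ /=.
rewrite deriveM; try by apply: diff_derivable; apply: diff_entry.
rewrite !derive_entry; try exact: diff_derivable.
have sc : forall a b : R, a *: b = a * b by [].
by rewrite !sc addrC [N z j k * _]mulrC.
Qed.

Lemma jacE n p (f : 'cV[R]_n -> 'cV[R]_p) x a : 'd f x a = jac f x *m a.
Proof.
rewrite {1}[a]matrix_sum_delta linear_sum.
apply/matrixP => i j; rewrite (ord1 j) !mxE summxE; apply: eq_bigr => k _.
by rewrite big_ord1 linearZ !mxE mulrC.
Qed.

Lemma derive_fst {U V W : normedModType R} (f : U -> W) (z : U * V) (t : U * V) :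
  'D_t (fun y => f y.1) z = 'D_(t.1) f z.1.
Proof. by []. Qed.

Lemma derive_snd {U V W : normedModType R} (f : V -> W) (z : U * V) (t : U * V) :
  'D_t (fun y => f y.2) z = 'D_(t.2) f z.2.
Proof. by []. Qed.

End S2.


Section S4.
Variable R : realType.

Lemma sm_diff {V W : normedModType R} (A : set V) (f : V -> W) y :
  smooth_on A f -> A y -> differentiable f y.
Proof. by move=> h Ay; exact: ((h 1%N).1 y Ay). Qed.

Lemma sm_D {V W : normedModType R} (A : set V) (f : V -> W) v :
  smooth_on A f -> smooth_on A ('D_v f).
Proof. by move=> h k; exact: ((h k.+1).2 v). Qed.

Lemma sm_cont {V W : normedModType R} (A : set V) (f : V -> W) y :
  smooth_on A f -> A y -> {for y, continuous f}.
Proof. by move=> h Ay; exact: (h 0%N y Ay). Qed.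

Lemma sm_schwarz {V : normedModType R} (A : set V) (g : V -> R) u v y :
  open A -> smooth_on A g -> A y -> 'D_v ('D_u g) y = 'D_u ('D_v g) y.
Proof.
move=> oA hg Ay; apply: (@schwarz R V A g y u v oA Ay).
- by move=> p Ap; exact: sm_diff hg Ap.
- by move=> p Ap; exact: sm_diff (sm_D u hg) Ap.
- by move=> p Ap; exact: sm_diff (sm_D v hg) Ap.
- exact: sm_cont (sm_D v (sm_D u hg)) Ay.
- exact: sm_cont (sm_D u (sm_D v hg)) Ay.
Qed.

Lemma open_near {V : normedModType R} (A : set V) y (P : V -> Prop) :
  open A -> A y -> (forall p, A p -> P p) -> \forall p \near y, P p.
Proof.
move=> oA Ay h; have NA : \forall p \near y, A p by apply: open_nbhs_nbhs; split.
exact: (filterS h NA).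
Qed.

Lemma D_lin n {W : normedModType R} (h : 'cV[R]_n -> W) x a :
  differentiable h x ->
  'D_a h x = \sum_(k < n) a k ord0 *: 'D_(delta_mx k ord0) h x.
Proof.
move=> dh; rewrite deriveE // {1}[a]matrix_sum_delta linear_sum.
apply: eq_bigr => k _; rewrite big_ord1 linearZ deriveE //.
Qed.

Section Kpart.
Variables (n : nat) (X : set 'cV[R]_n) (K : 'cV[R]_n -> R).
Hypotheses (oX : open X) (hK : smooth_on X K).

Local Notation e i := (delta_mx i ord0 : 'cV[R]_n).

Lemma grad_eq y : X y -> grad K y = \col_i 'D_(e i) K y.
Proof.
move=> Xy; apply/matrixP => i j; rewrite !mxE deriveE //.
exact: sm_diff hK Xy.
Qed.

End Kpart.
End S4.


Section S5.
Variable R : realType.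
Lemma open_eq_derive {V W : normedModType R} (A : set V) (f g : V -> W) y v :
  open A -> A y -> (forall p, A p -> f p = g p) -> 'D_v f y = 'D_v g y.
Proof.
move=> oA Ay h; have H := open_near oA Ay h.
exact: (@near_eq_derive R V W f g y v H).
Qed.
Section Kpart.
Variables (n : nat) (X : set 'cV[R]_n) (K : 'cV[R]_n -> R).
Hypotheses (oX : open X) (hK : smooth_on X K).

Local Notation e i := (delta_mx i ord0 : 'cV[R]_n).

Lemma hess_eq y : X y ->
  hessian K y = \matrix_(i, j) 'D_(e j) ('D_(e i) K) y.
Proof.
move=> Xy.
pose gK := fun z => \col_i 'D_(e i) K z : 'cV[R]_n.
have dgK : differentiable gK y.
  apply: diff_mx => i j.
  have -> : (fun z => gK z i j) = 'D_(e i) K by apply/funext => z; rewrite mxE.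
  exact: sm_diff (sm_D _ hK) Xy.
have [_ E] := near_eq_diff (open_near oX Xy (grad_eq hK)) dgK.
apply/matrixP => i j.
rewrite /hessian /jac mxE E -(deriveE (e j) dgK).
rewrite -(derive_entry i ord0 (diff_derivable (v := e j) dgK)).
have -> : (fun z => gK z i ord0) = 'D_(e i) K by apply/funext => z; rewrite mxE.
by rewrite mxE.
Qed.

Lemma hess_diff y : X y -> differentiable (hessian K) y.
Proof.
move=> Xy.
pose HM := fun z => \matrix_(i, j) 'D_(e j) ('D_(e i) K) z : 'M[R]_n.
have dHM : differentiable HM y.
  apply: diff_mx => i j.
  have -> : (fun z => HM z i j) = 'D_(e j) ('D_(e i) K) by apply/funext => z; rewrite mxE.
  exact: sm_diff (sm_D _ (sm_D _ hK)) Xy.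
by have [] := near_eq_diff (open_near oX Xy hess_eq) dHM.
Qed.

Lemma hess_D y a : X y ->
  'D_a (hessian K) y = \matrix_(i, j) 'D_a ('D_(e j) ('D_(e i) K)) y.
Proof.
move=> Xy.
pose HM := fun z => \matrix_(i, j) 'D_(e j) ('D_(e i) K) z : 'M[R]_n.
have dHM : differentiable HM y.
  apply: diff_mx => i j.
  have -> : (fun z => HM z i j) = 'D_(e j) ('D_(e i) K) by apply/funext => z; rewrite mxE.
  exact: sm_diff (sm_D _ (sm_D _ hK)) Xy.
rewrite (near_eq_derive _ (open_near oX Xy hess_eq)).
rewrite (derive_mx (diff_derivable (v := a) dHM)).
apply/matrixP => i j; rewrite !mxE.
have -> : (fun z => HM z i j) = 'D_(e j) ('D_(e i) K) by apply/funext => z; rewrite mxE.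
by [].
Qed.

Lemma hess_sym y : X y -> (hessian K y)^T = hessian K y.
Proof.
move=> Xy; rewrite hess_eq //; apply/matrixP => i j; rewrite !mxE.
exact: (sm_schwarz (e j) (e i) oX hK Xy).
Qed.

Lemma third_sym y (u v w : 'cV[R]_n) : X y ->
  'D_w ('D_v ('D_u K)) y = 'D_u ('D_v ('D_w K)) y.
Proof.
move=> Xy.
have H1 : forall p, X p -> 'D_v ('D_u K) p = 'D_u ('D_v K) p.
  by move=> p Xp; exact: (sm_schwarz u v oX hK Xp).
have H2 := @open_eq_derive _ _ X _ _ y w oX Xy H1.
have H3 : forall p, X p -> 'D_w ('D_v K) p = 'D_v ('D_w K) p.
  by move=> p Xp; exact: (sm_schwarz v w oX hK Xp).
have H4 := @open_eq_derive _ _ X _ _ y u oX Xy H3.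
exact: (eq_trans H2 (eq_trans (sm_schwarz u w oX (sm_D v hK) Xy) H4)).
Qed.
End Kpart.
End S5.


Section S6.
Variable R : realType.

Definition dot n (x y : 'cV[R]_n) : R := \sum_(i < n) x i ord0 * y i ord0.

Lemma dotC n (x y : 'cV[R]_n) : dot x y = dot y x.
Proof. by apply: eq_bigr => i _; rewrite mulrC. Qed.

Lemma dotDl n (x y z : 'cV[R]_n) : dot (x + y) z = dot x z + dot y z.
Proof. by rewrite /dot -big_split; apply: eq_bigr => i _; rewrite mxE mulrDl. Qed.

Lemma dot0r n (x : 'cV[R]_n) : dot x 0 = 0.
Proof. by rewrite /dot big1 // => i _; rewrite mxE mulr0. Qed.

Lemma dotT n p (M : 'M[R]_(n, p)) x y : dot (M *m x) y = dot (M^T *m y) x.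
Proof.
rewrite /dot; under eq_bigr do rewrite mxE big_distrl.
rewrite exchange_big; apply: eq_bigr => j _; rewrite mxE big_distrl.
by apply: eq_bigr => i _; rewrite mxE /=; ring.
Qed.

Lemma dot_e n (x : 'cV[R]_n) l : dot x (delta_mx l ord0) = x l ord0.
Proof.
rewrite /dot (bigD1 l) //= big1 ?addr0; first by rewrite mxE !eqxx mulr1.
by move=> i /negbTE il; rewrite mxE il mulr0.
Qed.

Lemma dot_Me n p (M : 'M[R]_(n, p)) k l :
  dot (M *m delta_mx k ord0) (delta_mx l ord0) = M l k.
Proof.
rewrite dot_e mxE (bigD1 k) //= big1 ?addr0; first by rewrite mxE !eqxx mulr1.
by move=> i /negbTE ik; rewrite mxE ik mulr0.
Qed.

Lemma omegaE n m (a b : 'cV[R]_n) (c d : 'cV[R]_m) a' b' c' d' :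
  omega (a, b, c, d) (a', b', c', d') = dot b a' - dot b' a + (dot d c' - dot d' c).
Proof. by rewrite /omega /= !sumrB. Qed.

End S6.


Section S7.
Variable R : realType.

Lemma alg n m (G Fx : 'M[R]_n) (Fu : 'M[R]_(n,m)) (Hx : 'M[R]_(m,n)) (Hu s : 'M[R]_m)
  (D : 'cV[R]_n -> 'cV[R]_n) :
  G^T = G -> s^T = s -> (forall a a', dot (D a) a' = dot (D a') a) ->
  (forall a c a' c',
   dot (D a + G *m (Fx *m a + Fu *m c)) a' - dot (D a' + G *m (Fx *m a' + Fu *m c')) a
   + (dot (s *m (Hx *m a + Hu *m c)) c' - dot (s *m (Hx *m a' + Hu *m c')) c) = 0)
  <-> [/\ s *m Hu = Hu^T *m s, G *m Fu = Hx^T *m s & G *m Fx = Fx^T *m G].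
Proof.
move=> hG hs hD; split => [h|[c1 c2 c3] a c a' c'].
  split; apply/matrixP => i j.
  - have := h 0 (delta_mx j ord0) 0 (delta_mx i ord0).
    rewrite !dot0r !mulmx0 !add0r !mulmxA !dot_Me.
    have -> : Hu^T *m s = (s *m Hu)^T by rewrite trmx_mul hs.
    move=> H; rewrite [RHS]mxE; lra.
  - have := h (delta_mx i ord0) 0 0 (delta_mx j ord0).
    rewrite !dot0r !mulmx0 !addr0 !add0r dotDl (hD 0) dot0r add0r !mulmxA !dot_Me.
    have -> : Hx^T *m s = (s *m Hx)^T by rewrite trmx_mul hs.
    move=> H; rewrite [RHS]mxE; lra.
  - have := h (delta_mx j ord0) 0 (delta_mx i ord0) 0.
    rewrite !dot0r !mulmx0 !addr0 !dotDl (hD (delta_mx j ord0)) !mulmxA !dot_Me.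
    have -> : Fx^T *m G = (G *m Fx)^T by rewrite trmx_mul hG.
    move=> H; rewrite [RHS]mxE; lra.
have f1 : dot (G *m (Fx *m a)) a' = dot (G *m (Fx *m a')) a.
  by rewrite !mulmxA dotT trmx_mul hG -c3.
have f2 : dot (G *m (Fu *m c)) a' = dot (s *m (Hx *m a')) c.
  by rewrite !mulmxA dotT c2 trmx_mul trmxK hs.
have f3 : dot (G *m (Fu *m c')) a = dot (s *m (Hx *m a)) c'.
  by rewrite !mulmxA dotT c2 trmx_mul trmxK hs.
have f4 : dot (s *m (Hu *m c)) c' = dot (s *m (Hu *m c')) c.
  by rewrite !mulmxA dotT trmx_mul hs -c1.
have f5 := hD a a'.
rewrite !mulmxDr !dotDl; lra.
Qed.

Lemma lag_max n m (beta : 'cV[R]_n * 'cV[R]_m -> 'cV[R]_n)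
    (delta : 'cV[R]_n * 'cV[R]_m -> 'cV[R]_m) :
  (forall v w, range (fun t => (t.1, beta t, t.2, delta t) : phase R n m) v ->
               range (fun t => (t.1, beta t, t.2, delta t) : phase R n m) w ->
               omega v w = 0) ->
  lagrangian_subspace (range (fun t => (t.1, beta t, t.2, delta t) : phase R n m)).
Proof.
move=> iso; split => // T' sub iso' add sc.
rewrite eqEsubset; split; last exact: sub.
move=> [[[a b] c] d] Tw.
have Tv : T' (a, beta (a, c), c, delta (a, c)) by apply: sub; exists (a, c).
have Tw' := add _ _ Tw (sc (-1) _ Tv).
have E : ((a, b, c, d) + (-1) *: (a, beta (a, c), c, delta (a, c)) : phase R n m) =
    (a + (-1) *: a, b + (-1) *: beta (a, c), c + (-1) *: c, d + (-1) *: delta (a, c)) by [].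
rewrite E !scaleN1r !subrr in Tw'.
have hb : b = beta (a, c).
  apply/matrixP => k j; rewrite (ord1 j); apply/eqP; rewrite -subr_eq0; apply/eqP.
  have Tk : T' (delta_mx k ord0, beta (delta_mx k ord0, 0), 0, delta (delta_mx k ord0, 0)).
    by apply: sub; exists (delta_mx k ord0, 0).
  have := iso' _ _ Tw' Tk; rewrite omegaE !dot0r dot_e !mxE; lra.
have hd : d = delta (a, c).
  apply/matrixP => k j; rewrite (ord1 j); apply/eqP; rewrite -subr_eq0; apply/eqP.
  have Tk : T' (0, beta (0, delta_mx k ord0), delta_mx k ord0, delta (0, delta_mx k ord0)).
    by apply: sub; exists (0, delta_mx k ord0).
  have := iso' _ _ Tw' Tk; rewrite omegaE !dot0r dot_e !mxE; lra.
by rewrite hb hd; exists (a, c).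
Qed.

End S7.


Section S8.
Variable R : realType.
Lemma diff_fst {U V : normedModType R} (z : U * V) : differentiable (fun y : U * V => y.1) z /\ 'd (fun y : U * V => y.1) z = (fun t => t.1) :> (U * V -> U).
Proof.
have fst_lin : linear (fun y : U * V => y.1) by [].
pose fM := GRing.isLinear.Build _ _ _ _ _ fst_lin.
pose fL : {linear (U * V)%type -> U} := HB.pack (fun y : U * V => y.1) fM.
have cf : continuous fL by move=> y; exact: cvg_fst.
split; first exact: (linear_differentiable z cf).
exact: (diff_lin z cf).
Qed.
Lemma diff_snd {U V : normedModType R} (z : U * V) : differentiable (fun y : U * V => y.2) z /\ 'd (fun y : U * V => y.2) z = (fun t => t.2) :> (U * V -> V).
Proof.
have snd_lin : linear (fun y : U * V => y.2) by [].
pose fM := GRing.isLinear.Build _ _ _ _ _ snd_lin.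
pose fL : {linear (U * V)%type -> V} := HB.pack (fun y : U * V => y.2) fM.
have cf : continuous fL by move=> y; exact: cvg_snd.
split; first exact: (linear_differentiable z cf).
exact: (diff_lin z cf).
Qed.

Lemma d_split n m p (f : 'cV[R]_n * 'cV[R]_m -> 'cV[R]_p) x u t :
  differentiable f (x, u) ->
  'd f (x, u) t = jac (fun y => f (y, u)) x *m t.1 + jac (fun c => f (x, c)) u *m t.2.
Proof.
move=> df.
have did1 : differentiable (@id 'cV[R]_n) x by apply: ex_diff.
have did2 : differentiable (@id 'cV[R]_m) u by apply: ex_diff.
have dc1 : differentiable (cst u : 'cV[R]_n -> 'cV[R]_m) x by exact: differentiable_cst.
have dc2 : differentiable (cst x : 'cV[R]_m -> 'cV[R]_n) u by exact: differentiable_cst.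
have dg1 := differentiable_pair did1 dc1.
have dg2 := differentiable_pair dc2 did2.
have Eg1 := diff_pair did1 dc1.
have Eg2 := diff_pair dc2 did2.
have Id1 : 'd (@id 'cV[R]_n) x = id :> ('cV[R]_n -> 'cV[R]_n) by exact: diff_val.
have Id2 : 'd (@id 'cV[R]_m) u = id :> ('cV[R]_m -> 'cV[R]_m) by exact: diff_val.
have C1 := diff_cst u x.
have C2 := diff_cst x u.
have E1 := diff_comp dg1 df.
have E2 := diff_comp dg2 df.
case: t => a c /=.
have -> : (a, c) = ((a, 0) + (0, c) : 'cV[R]_n * 'cV[R]_m).
  by have -> : ((a, 0) + (0, c) : 'cV[R]_n * 'cV[R]_m) = (a + 0, 0 + c) by []; rewrite addr0 add0r.
rewrite linearD -!jacE.
congr (_ + _).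
  have := congr1 (fun h => h a) E1; rewrite /= Eg1 Id1 C1 => <-; by [].
have := congr1 (fun h => h c) E2; rewrite /= Eg2 Id2 C2 => <-; by [].
Qed.

End S8.


Section S9.
Variable R : realType.

Lemma dPhi_eq n m (X : set 'cV[R]_n) (K : 'cV[R]_n -> R) (sigma : 'M[R]_m)
    (F : 'cV[R]_n -> 'cV[R]_m -> 'cV[R]_n) (H : 'cV[R]_n -> 'cV[R]_m -> 'cV[R]_m) x u :
  open X -> smooth_on X K ->
  smooth_on (X `*` setT) (fun z : 'cV[R]_n * 'cV[R]_m => F z.1 z.2) ->
  smooth_on (X `*` setT) (fun z : 'cV[R]_n * 'cV[R]_m => H z.1 z.2) -> X x ->
  'd (graph_param (hessian K) sigma F H) (x, u) =
  (fun t => (t.1, 'D_(t.1) (hessian K) x *m F x u +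
       hessian K x *m (jac (F ^~ u) x *m t.1 + jac (F x) u *m t.2), t.2,
       sigma *m (jac (H ^~ u) x *m t.1 + jac (H x) u *m t.2)) : phase R n m)
  :> ('cV[R]_n * 'cV[R]_m -> phase R n m).
Proof.
move=> oX hK hF hH Xx.
pose V := ('cV[R]_n * 'cV[R]_m)%type.
pose z0 : V := (x, u).
pose Fz := fun z : V => F z.1 z.2.
pose Hz := fun z : V => H z.1 z.2.
have Xz : (X `*` setT) z0 by split.
have dF : differentiable Fz z0 := sm_diff hF Xz.
have dH : differentiable Hz z0 := sm_diff hH Xz.
pose M := fun z : V => hessian K z.1.
have dM : differentiable M z0.
  exact: (differentiable_comp (diff_fst z0).1 (hess_diff oX hK Xx)).
have dS0 : differentiable (cst sigma : V -> 'M[R]_m) z0 by exact: differentiable_cst.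
have [dP EP] := diff_mulmx dM dF.
have [dS ES] := diff_mulmx dS0 dH.
pose P := fun z : V => M z *m Fz z.
pose S := fun z : V => (cst sigma : V -> 'M[R]_m) z *m Hz z.
pose p1 := fun z : V => (z.1, P z).
pose p2 := fun z : V => (p1 z, z.2).
have [df1 Ef1] := diff_fst z0.
have [df2 Ef2] := diff_snd z0.
have dp1 : differentiable p1 z0 := differentiable_pair df1 dP.
have dp2 : differentiable p2 z0 := differentiable_pair dp1 df2.
have -> : graph_param (hessian K) sigma F H = (fun z : V => (p2 z, S z)) by [].
rewrite (diff_pair dp2 dS).
have Ep2 := diff_pair dp1 df2.
have Ep1 := diff_pair df1 dP.
apply/funext => t.
rewrite Ep2.
cbv beta.
rewrite Ep1.
have DM : 'D_t M z0 = 'D_(t.1) (hessian K) x by [].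
have DS : 'D_t (cst sigma : V -> 'M[R]_m) z0 = 0 by exact: derive_cst.
have DF : 'D_t Fz z0 = jac (F ^~ u) x *m t.1 + jac (F x) u *m t.2.
  exact: (eq_trans (deriveE t dF) (d_split t dF)).
have DH : 'D_t Hz z0 = jac (H ^~ u) x *m t.1 + jac (H x) u *m t.2.
  exact: (eq_trans (deriveE t dH) (d_split t dH)).
have E1 : 'd (fun y : V => y.1) z0 t = t.1 := congr1 (fun h => h t) Ef1.
have E2 : 'd (fun y : V => y.2) z0 t = t.2 := congr1 (fun h => h t) Ef2.
have E3 : 'd (fun y => M y *m Fz y) z0 t = 'D_(t.1) (hessian K) x *m F x u +
       hessian K x *m (jac (F ^~ u) x *m t.1 + jac (F x) u *m t.2).
  exact: (eq_trans (EP t) (congr2 (fun A B => A *m Fz z0 + M z0 *m B) DM DF)).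
have E4 : 'd (fun y => (cst sigma : V -> 'M[R]_m) y *m Hz y) z0 t =
       sigma *m (jac (H ^~ u) x *m t.1 + jac (H x) u *m t.2).
  apply: (eq_trans (ES t)).
  apply: (eq_trans (congr2 (fun A B => A *m Hz z0 + sigma *m B) DS DH)).
  by rewrite mul0mx add0r.
exact: (f_equal2 pair (f_equal2 pair (f_equal2 pair E1 E3) E2) E4).
Qed.
End S9.


Section S10.
Variable R : realType.

Lemma dsym_abs n (Dm : 'cV[R]_n -> 'M[R]_n) (F0 : 'cV[R]_n) (T : 'I_n -> 'I_n -> 'I_n -> R) :
  (forall a i j, Dm a i j = \sum_(k < n) a k ord0 * T k j i) ->
  (forall i j k, T k j i = T i j k) ->
  forall a a', dot (Dm a *m F0) a' = dot (Dm a' *m F0) a.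
Proof.
move=> hD hT.
have E : forall a a', dot (Dm a *m F0) a' =
    \sum_(j < n) F0 j ord0 * \sum_(i < n) \sum_(k < n) a k ord0 * a' i ord0 * T k j i.
  move=> a a'; rewrite /dot.
  under eq_bigr do rewrite mxE big_distrl.
  rewrite exchange_big; apply: eq_bigr => j _ /=.
  rewrite big_distrr; apply: eq_bigr => i _ /=.
  rewrite hD !big_distrl big_distrr; apply: eq_bigr => k _ /=.
  ring.
move=> a a'; rewrite !E; apply: eq_bigr => j _; congr (_ * _).
rewrite [RHS]exchange_big; apply: eq_bigr => i _; apply: eq_bigr => k _.
by rewrite (hT i j k); ring.
Qed.

Lemma dsym n (X : set 'cV[R]_n) (K : 'cV[R]_n -> R) x (F0 : 'cV[R]_n) :
  open X -> smooth_on X K -> X x ->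
  forall a a', dot ('D_a (hessian K) x *m F0) a' = dot ('D_a' (hessian K) x *m F0) a.
Proof.
move=> oX hK Xx.
apply: (@dsym_abs n (fun a => 'D_a (hessian K) x) F0
  (fun k j i => 'D_(delta_mx k ord0) ('D_(delta_mx j ord0) ('D_(delta_mx i ord0) K)) x)).
  move=> a i j.
  have h1 := congr1 (fun M : 'M[R]_n => M i j) (hess_D oX hK a Xx).
  apply: (eq_trans h1); rewrite mxE.
  exact: (D_lin a (sm_diff (sm_D _ (sm_D _ hK)) Xx)).
move=> i j k.
exact: (third_sym oX hK (delta_mx i ord0) (delta_mx j ord0) (delta_mx k ord0) Xx).
Qed.

Lemma sig_sym m (s : 'M[R]_m) : signature_matrix s -> s^T = s.
Proof.
move=> [/is_diag_mxP hd _]; apply/matrixP => i j; rewrite mxE.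
have [->|ij] := eqVneq i j; first by [].
by rewrite !hd // eq_sym.
Qed.

End S10.

Theorem proposition3p6 (R : realType) (n m : nat) (X : set 'cV[R]_n)
    (K : 'cV[R]_n -> R) (sigma : 'M[R]_m)
    (F : 'cV[R]_n -> 'cV[R]_m -> 'cV[R]_n)
    (H : 'cV[R]_n -> 'cV[R]_m -> 'cV[R]_m) :
  open X -> X !=set0 -> connected X ->
  convex_set (X : set (convex_lmodType 'cV[R]_n)) ->
  smooth_on X K ->
  (forall x, X x -> hessian K x \in unitmx) ->
  signature_matrix sigma ->
  smooth_on (X `*` setT) (fun z : 'cV[R]_n * 'cV[R]_m => F z.1 z.2) ->
  smooth_on (X `*` setT) (fun z : 'cV[R]_n * 'cV[R]_m => H z.1 z.2) ->
  reciprocal X (hessian K) sigma F H <->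
  (forall x u, X x ->
     [/\ sigma *m jac (H x) u = (jac (H x) u)^T *m sigma,
         hessian K x *m jac (F x) u = (jac (H ^~ u) x)^T *m sigma &
         hessian K x *m jac (F ^~ u) x = (jac (F ^~ u) x)^T *m hessian K x]).
Proof.
move=> oX _ _ _ hK _ hsig hF hH.
have hs := sig_sym hsig.
have key : forall x u, X x ->
   (lagrangian_subspace (range ('d (graph_param (hessian K) sigma F H) (x, u)
        : _ -> phase R n m)) <->
    [/\ sigma *m jac (H x) u = (jac (H x) u)^T *m sigma,
        hessian K x *m jac (F x) u = (jac (H ^~ u) x)^T *m sigma &
        hessian K x *m jac (F ^~ u) x = (jac (F ^~ u) x)^T *m hessian K x]).
  move=> x u Xx.
  rewrite (dPhi_eq sigma u oX hK hF hH Xx).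
  have A := @alg R n m (hessian K x) (jac (F ^~ u) x) (jac (F x) u) (jac (H ^~ u) x)
    (jac (H x) u) sigma (fun a => 'D_a (hessian K) x *m F x u)
    (hess_sym oX hK Xx) hs (dsym (F x u) oX hK Xx).
  apply: (iff_trans _ A); split.
    move=> [iso _] a c a' c'.
    have := iso _ _ (ex_intro2 _ _ (a, c) I erefl) (ex_intro2 _ _ (a', c') I erefl).
    rewrite omegaE; exact.
  move=> h.
  apply: (@lag_max R n m
    (fun t => 'D_(t.1) (hessian K) x *m F x u +
       hessian K x *m (jac (F ^~ u) x *m t.1 + jac (F x) u *m t.2))
    (fun t => sigma *m (jac (H ^~ u) x *m t.1 + jac (H x) u *m t.2))).
  move=> v w [[a c] _ <-] [[a' c'] _ <-].
  rewrite omegaE; exact: h.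
split => [rec x u Xx | cond x u Xx].
  exact: (key x u Xx).1 (rec x u Xx).
exact: (key x u Xx).2 (cond x u Xx).
Qed.
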